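(* There exists $A\in(0,\infty)$ depending only on the coefficients of the polynomial $P$ such that for all $\tau\in\mathbb{R}$ and $c\in(1,\infty)$ it holds $P(\tau,c)\ge \tau^n/(2n)-A\,c^{n/2}$.
   Context: $n\in2\mathbb{N}_+$, $n\ge4$; $P(\tau)=\sum_{m=0}^na_m\tau^m$ with $a_0,\dots,a_{n-1}\in\mathbb{R}$, $a_n=1/n$; and $P(\tau,c)=\sum_{m=0}^n a_m\sum_{k=0}^{\lfloor m/2\rfloor}\frac{(-1)^k m!}{(m-2k)!k!2^k}c^k\tau^{m-2k}$. *)

(* Defs.v *)
From HB Require Import structures.
From mathcomp Require Import all_boot all_order all_algebra.
From mathcomp Require Export reals.
Set Implicit Arguments. Unset Strict Implicit. Unset Printing Implicit Defensive.
Import Order.TTheory GRing.Theory Num.Theory.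
Local Open Scope ring_scope.

Definition Pc (R : realType) (n : nat) (a : nat -> R) (tau c : R) : R :=
  \sum_(m < n.+1) a m *
    \sum_(k < (m./2).+1)
      ((-1) ^+ k * (m`!)%:R / (((m - 2 * k)%N`!)%:R * (k`!)%:R * 2 ^+ k))
        * c ^+ k * tau ^+ (m - 2 * k).

(* Main.v *)
Require Import Defs.
From mathcomp Require Import all_boot all_order all_algebra reals.
From mathcomp Require Import ring lra zify.
Import Order.TTheory GRing.Theory Num.Theory.
Local Open Scope ring_scope.

Lemma key (R : realType) (n j k : nat) (s t M : R) : 1 <= s -> 1 <= M -> 0 <= t ->
  (j < n)%N -> (j + 2*k <= n)%N -> (s^+2)^+k * t^+j <= M^+n * s^+n + t^+n / M.
Proof.
move=> s1 M1 t0 jn jkn.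
have s0 : 0 <= s by lra.
have M0 : 0 < M by lra.
have h1 : (s^+2)^+k <= s^+(n-j).
  by rewrite -exprM; apply: ler_weXn2l => //; lia.
have tj0 : 0 <= t^+j by apply: exprn_ge0.
have tn0 : 0 <= t^+n / M by apply: divr_ge0; [apply: exprn_ge0|lra].
apply: (le_trans (ler_wpM2r tj0 h1)).
have ns : n = ((n - j) + j)%N by lia.
case: (leP t (M*s)) => ht.
- have h2 : t^+j <= (M*s)^+j by apply: lerXn2r => //; rewrite qualifE /=; apply: mulr_ge0; lra.
  have h3 : M^+j <= M^+n by apply: ler_weXn2l => //; lia.
  have h4: s^+(n-j) * t^+j <= M^+n * s^+n.
    apply: (le_trans (ler_wpM2l (exprn_ge0 _ s0) h2)).
    rewrite exprMn mulrCA -exprD -ns.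
    apply: ler_wpM2r; first exact: exprn_ge0.
    exact: h3.
  have : 0 <= t^+n / M by [].
  lra.
- have h2 : (M*s)^+(n-j) <= t^+(n-j) by apply: lerXn2r => //; [rewrite qualifE /=; apply: mulr_ge0; lra | lra].
  have h3 : M <= M^+(n-j) by apply: ler_eXnr => //; lia.
  have h5 : M * (s^+(n-j) * t^+j) <= t^+n.
    have tn : t^+n = t^+(n-j) * t^+j by rewrite -exprD -ns.
    rewrite tn mulrA.
    apply: ler_wpM2r => //.
    apply: le_trans h2.
    rewrite exprMn; apply: ler_wpM2r; [exact: exprn_ge0| exact: h3].
  rewrite ler_wpDl //; first by apply: mulr_ge0; apply: exprn_ge0; lra.
  by rewrite ler_pdivlMr // mulrC.
Qed.

Definition Cf (R : realType) (m k : nat) : R :=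
  (-1) ^+ k * (m`!)%:R / (((m - 2 * k)%N`!)%:R * (k`!)%:R * 2 ^+ k).

Theorem mainTheorem3 (R : realType) (n : nat) (a : nat -> R) :
  ~~ odd n -> (4 <= n)%N -> a n = (n%:R)^-1 ->
  exists A : R, 0 < A /\
    forall tau c : R, 1 < c ->
      tau ^+ n / (2 * n)%:R - A * c ^+ (n./2) <= Pc n a tau c.
Proof.
move=> ev n4 an.
pose K1 := \sum_(m < n) \sum_(k < (m./2).+1) `|a m * Cf R m k|.
pose K2 := \sum_(k < n./2) `|a n * Cf R n k.+1|.
pose K := K1 + K2.
have K0 : 0 <= K by apply: addr_ge0; apply: sumr_ge0 => i _ //; apply: sumr_ge0.
pose N : R := n%:R.
have N0 : 0 < N by rewrite /N ltr0n; lia.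
pose M := 2 * N * K + 1.
have NK : 0 <= N * K by apply: mulr_ge0; lra.
have M1 : 1 <= M by rewrite /M; lra.
have Mn0 : 0 <= M ^+ n by apply: exprn_ge0; lra.
exists (K * M^+n + 1); split; first by have := mulr_ge0 K0 Mn0; lra.
move=> tau c c1.
have ee : forall x : R, x^+n = (x^+2)^+(n./2) by move=> x; rewrite -exprM mul2n even_halfK.
pose s := Num.sqrt c.
have s0 : 0 <= s by apply: sqrtr_ge0.
have sc : s^+2 = c by apply: sqr_sqrtr; lra.
have s1 : 1 <= s by rewrite -sc in c1; nra.
pose t := `|tau|.
have t0 : 0 <= t by apply: normr_ge0.
have tn : tau^+n = t^+n by rewrite !ee real_normK // num_real.
have cn : c^+(n./2) = s^+n by rewrite ee sc.
pose E := M^+n * s^+n + t^+n / M.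
have bound : forall m k, (m <= n)%N -> (k <= m./2)%N -> (m < n)%N || (0 < k)%N ->
    - (`|a m * Cf R m k| * E) <= a m * (Cf R m k * c^+k * tau^+(m-2*k)).
  move=> m k mn km hh.
  have h2k : (2 * k <= m)%N by move: (odd_double_half m); rewrite -mul2n => hm; lia.
  apply: lerNnormlW.
  move: (Cf R m k) => C.
  rewrite !normrM -!mulrA; apply: ler_wpM2l => //; apply: ler_wpM2l => //.
  rewrite normrX (ger0_norm (_ : 0 <= c)) ?normrX; last lra.
  rewrite -sc; apply: key => //; lia.
have S1 : - (K1 * E) <= \sum_(i<n) a i * \sum_(k < (i./2).+1) (Cf R i k * c^+k * tau^+(i-2*k)).
  rewrite /K1 mulr_suml -sumrN; apply: ler_sum => i _.
  rewrite mulr_suml -sumrN mulr_sumr; apply: ler_sum => k _.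
  apply: bound; [exact: ltnW | by rewrite -ltnS | by rewrite ltn_ord].
have S2 : - (K2 * E) <= \sum_(k < n./2) a n * (Cf R n k.+1 * c^+k.+1 * tau^+(n-2*k.+1)).
  rewrite /K2 mulr_suml -sumrN; apply: ler_sum => k _.
  apply: bound => //; rewrite ?orbT //.
have L : a n * (Cf R n 0 * c^+0 * tau^+(n-2*0)) = tau^+n / N.
  rewrite an /Cf !expr0 muln0 subn0 fact0.
  have hf : n`!%:R != 0 :> R by rewrite pnatr_eq0 -lt0n fact_gt0.
  by rewrite !mul1r !mulr1 divff // mul1r mulrC.
have PcE : Pc n a tau c = \sum_(i<n) a i * \sum_(k < (i./2).+1) (Cf R i k * c^+k * tau^+(i-2*k))
   + (a n * (Cf R n 0 * c^+0 * tau^+(n-2*0)) + \sum_(k < n./2) a n * (Cf R n k.+1 * c^+k.+1 * tau^+(n-2*k.+1))).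
  rewrite /Pc big_ord_recr /= big_ord_recl /=.
  rewrite mulrDr mulr_sumr; congr (_ + (_ + _)).

rewrite PcE L tn cn natrM -/N.
have M0 : 0 < M by lra.
have X0 : 0 <= t^+n by apply: exprn_ge0.
have Y0 : 0 <= s^+n by apply: exprn_ge0.
have hM : t^+n / (2 * N) * M = K * t^+n + t^+n / (2 * N).
  by rewrite /M; field; apply/eqP; lra.
have hX : 0 <= t^+n / (2 * N) by apply: divr_ge0; lra.
have h : K * (t^+n / M) <= t^+n / (2 * N).
  rewrite mulrA ler_pdivrMr // hM; lra.
have hE : K1 * E + K2 * E = K * M^+n * s^+n + K * (t^+n / M) by rewrite /E /K; ring.
have hN : t^+n / N = t^+n / (2 * N) + t^+n / (2 * N) by field; apply/eqP; lra.
lra.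
Qed.
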